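(* Let $0\to\mathfrak{r}\to\mathfrak{f}\xrightarrow{\rho}\mathfrak{g}\to0$ be a free presentation of a Leibniz algebra $\mathfrak{g}$. Let $\mathfrak{n}$ be a two-sided ideal of $\mathfrak{g}$ and $\mathfrak{s}$ a two-sided ideal of $\mathfrak{f}$ such that $\rho(\mathfrak{s})=\mathfrak{n}$ (i.e. $\mathfrak{n}$ corresponds to $(\mathfrak{s}+\mathfrak{r})/\mathfrak{r}$ under $\mathfrak{g}\cong\mathfrak{f}/\mathfrak{r}$). Then there is a natural exact sequence $$0\to\frac{\mathfrak{r}\cap[\mathfrak{f},\mathfrak{s}]_{\mathrm{Lie}}}{[\mathfrak{f},\mathfrak{r}]_{\mathrm{Lie}}\cap[\mathfrak{f},\mathfrak{s}]_{\mathrm{Lie}}}\to\mathcal{M}^{\mathrm{Lie}}(\mathfrak{g})\to\mathcal{M}^{\mathrm{Lie}}(\mathfrak{g}/\mathfrak{n})\to\frac{\mathfrak{n}\cap[\mathfrak{g},\mathfrak{g}]_{\mathrm{Lie}}}{[\mathfrak{g},\mathfrak{n}]_{\mathrm{Lie}}}\to0.$$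
   Context: Fix a field $\mathbb{K}$ with $\frac12\in\mathbb{K}$. A Leibniz algebra is a $\mathbb{K}$-vector space with a bilinear bracket satisfying $[x,[y,z]]=[[x,y],z]-[[x,z],y]$. For two-sided ideals $\mathfrak{m},\mathfrak{n}$, $[\mathfrak{m},\mathfrak{n}]_{\mathrm{Lie}}$ is the subspace spanned by all $[m,n]+[n,m]$. A free presentation of $\mathfrak{g}$ is a short exact sequence $0\to\mathfrak{r}\to\mathfrak{f}\to\mathfrak{g}\to0$ with $\mathfrak{f}$ a free Leibniz algebra. The Schur $\mathrm{Lie}$-multiplier is $\mathcal{M}^{\mathrm{Lie}}(\mathfrak{g})=\frac{\mathfrak{r}\cap[\mathfrak{f},\mathfrak{f}]_{\mathrm{Lie}}}{[\mathfrak{f},\mathfrak{r}]_{\mathrm{Lie}}}$, independent of the presentation up to isomorphism. *)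

(* Defs.v *)
From HB Require Import structures.
From mathcomp Require Import all_boot all_algebra.
Set Implicit Arguments. Unset Strict Implicit. Unset Printing Implicit Defensive.
Import GRing.Theory.
Local Open Scope ring_scope.

Section Leibniz.
Variable K : fieldType.

Definition leibniz (V : lmodType K) (br : V -> V -> V) : Prop :=
  [/\ (forall a x y z, br (a *: x + y) z = a *: br x z + br y z),
      (forall a x y z, br z (a *: x + y) = a *: br z x + br z y) &
      (forall x y z, br x (br y z) = br (br x y) z - br (br x z) y)].

Definition leibniz_hom (V W : lmodType K) (brV : V -> V -> V) (brW : W -> W -> W)
  (phi : V -> W) : Prop :=
  (forall a x y, phi (a *: x + y) = a *: phi x + phi y) /\
  (forall x y, phi (brV x y) = brW (phi x) (phi y)).

Definition free_leibniz (F : lmodType K) (brF : F -> F -> F) : Prop :=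
  leibniz brF /\
  exists (X : Type) (i : X -> F),
    forall (L : lmodType K) (brL : L -> L -> L), leibniz brL ->
    forall h : X -> L,
      exists! phi : F -> L, leibniz_hom brF brL phi /\ (forall x, phi (i x) = h x).

Definition subspace (V : lmodType K) (A : V -> Prop) : Prop :=
  A 0 /\ (forall a x y, A x -> A y -> A (a *: x + y)).

Definition ideal (V : lmodType K) (br : V -> V -> V) (I : V -> Prop) : Prop :=
  subspace I /\ (forall x y, I y -> I (br x y) /\ I (br y x)).

Definition full (V : Type) : V -> Prop := fun _ => True.
Definition meet (V : Type) (A B : V -> Prop) : V -> Prop := fun x => A x /\ B x.
Definition kernel (V W : lmodType K) (phi : V -> W) : V -> Prop :=
  fun x => phi x = 0.

Definition lie_br (V : lmodType K) (br : V -> V -> V) (M N : V -> Prop) : V -> Prop :=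
  fun x => exists s : seq (K * V * V),
    (forall p, p \in s -> M p.1.2 /\ N p.2) /\
    x = \sum_(p <- s) p.1.1 *: (br p.1.2 p.2 + br p.2 p.1.2).

(* Schur Lie-multiplier of the algebra presented by f with kernel r:
   numerator r ∩ [f,f]_Lie, denominator [f,r]_Lie (as subspaces of f). *)
Definition schur_num (F : lmodType K) (br : F -> F -> F) (R : F -> Prop) :=
  meet R (lie_br br (@full F) (@full F)).
Definition schur_den (F : lmodType K) (br : F -> F -> F) (R : F -> Prop) :=
  lie_br br (@full F) R.

(* A sequence of subquotients A_i / B_i (A_i, B_i subspaces of V_i) with maps
   induced by f_i : V_i -> V_{i+1}:
     0 -> A1/B1 -> A2/B2 -> A3/B3 -> A4/B4 -> 0
   is a well-defined exact sequence. *)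
Definition induces (V W : lmodType K) (A B : V -> Prop) (C D : W -> Prop)
  (f : V -> W) : Prop :=
  (forall x, A x -> C (f x)) /\ (forall x, B x -> D (f x)).

Definition exact_at (V1 V2 V3 : lmodType K) (A1 : V1 -> Prop) (f : V1 -> V2)
  (A2 B2 : V2 -> Prop) (g : V2 -> V3) (B3 : V3 -> Prop) : Prop :=
  forall x, A2 x -> (B3 (g x) <-> exists y, A1 y /\ B2 (x - f y)).

Definition exact_subquot4 (V1 V2 V3 V4 : lmodType K)
  (A1 B1 : V1 -> Prop) (f1 : V1 -> V2) (A2 B2 : V2 -> Prop) (f2 : V2 -> V3)
  (A3 B3 : V3 -> Prop) (f3 : V3 -> V4) (A4 B4 : V4 -> Prop) : Prop :=
  induces A1 B1 A2 B2 f1 /\ induces A2 B2 A3 B3 f2 /\ induces A3 B3 A4 B4 f3 /\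
  (* injectivity at A1/B1 *)
  (forall x, A1 x -> B2 (f1 x) -> B1 x) /\
  exact_at A1 f1 A2 B2 f2 B3 /\
  exact_at A2 f2 A3 B3 f3 B4 /\
  (* surjectivity onto A4/B4 *)
  (forall z, A4 z -> exists x, A3 x /\ B4 (z - f3 x)).

End Leibniz.

(* Main.v *)
Require Import Defs.
From mathcomp Require Import all_boot all_algebra.
Set Implicit Arguments. Unset Strict Implicit. Unset Printing Implicit Defensive.
Import GRing.Theory.
Local Open Scope ring_scope.

Section H.
Variable K : fieldType.

Lemma lie_br0 (V : lmodType K) (br : V -> V -> V) M N : lie_br br M N 0.
Proof. by exists [::]; split => //; rewrite big_nil. Qed.

Lemma lie_brC (V : lmodType K) (br : V -> V -> V) M N a x y :
  lie_br br M N x -> lie_br br M N y -> lie_br br M N (a *: x + y).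
Proof.
move=> [s1 [H1 ->]] [s2 [H2 ->]].
exists ([seq (a * p.1.1, p.1.2, p.2) | p <- s1] ++ s2); split.
- move=> p; rewrite mem_cat => /orP [/mapP [q qin ->] | pin]; last exact: H2.
  by have := H1 q qin.
- rewrite big_cat big_map /= scaler_sumr; congr (_ + _).
  by apply: eq_bigr => p _; rewrite scalerA.
Qed.

Lemma lie_brD (V : lmodType K) (br : V -> V -> V) M N x y :
  lie_br br M N x -> lie_br br M N y -> lie_br br M N (x + y).
Proof. by move=> hx hy; have := lie_brC 1 hx hy; rewrite scale1r. Qed.

Lemma lie_brB (V : lmodType K) (br : V -> V -> V) M N x y :
  lie_br br M N x -> lie_br br M N y -> lie_br br M N (x - y).
Proof.
move=> hx hy; have := lie_brC (-1) hy hx; rewrite scaleN1r addrC //.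
Qed.

Lemma lie_br_mono (V : lmodType K) (br : V -> V -> V) (M N M' N' : V -> Prop) :
  (forall x, M x -> M' x) -> (forall x, N x -> N' x) ->
  forall x, lie_br br M N x -> lie_br br M' N' x.
Proof.
move=> hM hN x [s [Hs ->]]; exists s; split => // p /Hs [].
by move=> /hM ? /hN.
Qed.

Lemma lin0 (V W : lmodType K) (phi : V -> W) :
  (forall a x y, phi (a *: x + y) = a *: phi x + phi y) -> phi 0 = 0.
Proof.
move=> hl; have := hl 1 0 0; rewrite !scale1r addr0 => h.
by apply: (@addrI _ (phi 0)); rewrite addr0 -h.
Qed.

Lemma linD (V W : lmodType K) (phi : V -> W) :
  (forall a x y, phi (a *: x + y) = a *: phi x + phi y) ->
  forall x y, phi (x + y) = phi x + phi y.
Proof. by move=> hl x y; have := hl 1 x y; rewrite !scale1r. Qed.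

Lemma linZ (V W : lmodType K) (phi : V -> W) :
  (forall a x y, phi (a *: x + y) = a *: phi x + phi y) ->
  forall a x, phi (a *: x) = a *: phi x.
Proof. by move=> hl a x; have := hl a x 0; rewrite addr0 lin0 // addr0. Qed.

Lemma linB (V W : lmodType K) (phi : V -> W) :
  (forall a x y, phi (a *: x + y) = a *: phi x + phi y) ->
  forall x y, phi (x - y) = phi x - phi y.
Proof. by move=> hl x y; have := hl (-1) y x; rewrite !scaleN1r addrC => ->; rewrite addrC. Qed.

Lemma lin_sum (V W : lmodType K) (phi : V -> W) (hl : forall a x y, phi (a *: x + y) = a *: phi x + phi y)
  (T : Type) (s : seq T) (f : T -> V) :
  phi (\sum_(p <- s) f p) = \sum_(p <- s) phi (f p).
Proof.
elim: s => [|p s IH]; first by rewrite !big_nil lin0.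
by rewrite !big_cons linD // IH.
Qed.

Lemma lie_br_image (V W : lmodType K) (brV : V -> V -> V) (brW : W -> W -> W) phi
  (M N : V -> Prop) (M' N' : W -> Prop) :
  leibniz_hom brV brW phi ->
  (forall x, M x -> M' (phi x)) -> (forall x, N x -> N' (phi x)) ->
  forall x, lie_br brV M N x -> lie_br brW M' N' (phi x).
Proof.
move=> [hl hb] hM hN x [s [Hs ->]].
exists [seq (p.1.1, phi p.1.2, phi p.2) | p <- s]; split.
- by move=> p /mapP [q /Hs [h1 h2] ->] /=; split; [apply: hM | apply: hN].
- rewrite big_map lin_sum //; apply: eq_bigr => p _ /=.
  by rewrite linZ // linD // !hb.
Qed.

Lemma lie_br_lift (V W : lmodType K) (brV : V -> V -> V) (brW : W -> W -> W) phi
  (M N : V -> Prop) (M' N' : W -> Prop) :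
  leibniz_hom brV brW phi ->
  (forall y, M' y -> exists x, M x /\ phi x = y) ->
  (forall y, N' y -> exists x, N x /\ phi x = y) ->
  forall y, lie_br brW M' N' y -> exists x, lie_br brV M N x /\ phi x = y.
Proof.
move=> [hl hb] hM hN y [s [Hs Hy]]; subst y.
elim: s Hs => [|p s IH] Hs.
  by exists 0; split; [exact: lie_br0 | rewrite big_nil lin0].
have [|x [hx ex]] := IH.
  by move=> q qin; apply: Hs; rewrite inE qin orbT.
have [] := Hs p; first by rewrite inE eqxx.
move=> /hM [m [hm em]] /hN [n [hn en]].
exists (p.1.1 *: (brV m n + brV n m) + x); split.
- apply: lie_brC => //; exists [:: (1, m, n)]; split.
    by move=> q; rewrite inE => /eqP -> /=.
  by rewrite big_cons big_nil scale1r addr0.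
- by rewrite big_cons -ex -em -en hl linD // !hb.
Qed.

Lemma lie_br_ideal (V : lmodType K) (br : V -> V -> V) (M I : V -> Prop) :
  ideal br I -> forall x, lie_br br M I x -> I x.
Proof.
move=> [[I0 Isub] Ibr] x [s [Hs Hx]]; subst x.
elim: s Hs => [|p s IH] Hs; first by rewrite big_nil.
rewrite big_cons; apply: (Isub); last first.
  by apply: IH => q qin; apply: Hs; rewrite inE qin orbT.
have [_ /Ibr hi] := Hs p (mem_head _ _).
have := Isub 1 _ _ (proj1 (hi p.1.2)) (proj2 (hi p.1.2)).
by rewrite scale1r.
Qed.

Lemma lie_br_split (V : lmodType K) (br : V -> V -> V) (M N N1 N2 : V -> Prop) :
  (forall a x y z, br (a *: x + y) z = a *: br x z + br y z) ->
  (forall a x y z, br z (a *: x + y) = a *: br z x + br z y) ->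
  (forall x, N x -> exists a b, N1 a /\ N2 b /\ x = a + b) ->
  forall x, lie_br br M N x ->
  exists u v, lie_br br M N1 u /\ lie_br br M N2 v /\ x = u + v.
Proof.
move=> hl hr hN x [s [Hs Hx]]; subst x.
elim: s Hs => [|p s IH] Hs.
  by exists 0, 0; rewrite big_nil addr0; split; [|split] => //; exact: lie_br0.
have [|u [v [hu [hv eu]]]] := IH.
  by move=> q qin; apply: Hs; rewrite inE qin orbT.
have [hm /hN [a [b [ha [hb ep]]]]] := Hs p (mem_head _ _).
exists (p.1.1 *: (br p.1.2 a + br a p.1.2) + u), (p.1.1 *: (br p.1.2 b + br b p.1.2) + v).
split; [|split].
- apply: lie_brC => //; exists [:: (1, p.1.2, a)]; split.
    by move=> q; rewrite inE => /eqP -> /=.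
  by rewrite big_cons big_nil scale1r addr0.
- apply: lie_brC => //; exists [:: (1, p.1.2, b)]; split.
    by move=> q; rewrite inE => /eqP -> /=.
  by rewrite big_cons big_nil scale1r addr0.
- rewrite big_cons eu ep.
  have e1 : br p.1.2 (a + b) = br p.1.2 a + br p.1.2 b by have := hr 1 a b p.1.2; rewrite !scale1r.
  have e2 : br (a + b) p.1.2 = br a p.1.2 + br b p.1.2 by have := hl 1 a b p.1.2; rewrite !scale1r.
  rewrite e1 e2 !scalerDr.
  set A := p.1.1 *: br p.1.2 a; set B := p.1.1 *: br p.1.2 b.
  set C := p.1.1 *: br a p.1.2; set D := p.1.1 *: br b p.1.2.
  clearbody A B C D.
  by rewrite [A + B + _]addrACA [LHS]addrACA.
Qed.

End H.

Theorem mainTheorem6 (K : fieldType) (hK : (2%:R : K) != 0)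
  (F : lmodType K) (brF : F -> F -> F) (hF : free_leibniz brF)
  (G : lmodType K) (brG : G -> G -> G) (hG : leibniz brG)
  (rho : F -> G) (hrho : leibniz_hom brF brG rho)
  (rho_surj : forall y, exists x, rho x = y)
  (N : G -> Prop) (hN : ideal brG N)
  (S : F -> Prop) (hS : ideal brF S)
  (hSN : forall y, N y <-> exists x, S x /\ rho x = y)
  (* Q with pi : G -> Q surjective with kernel N is the quotient g/n *)
  (Q : lmodType K) (brQ : Q -> Q -> Q) (hQ : leibniz brQ)
  (pi : G -> Q) (hpi : leibniz_hom brG brQ pi)
  (pi_surj : forall q, exists y, pi y = q)
  (hker : forall y, pi y = 0 <-> N y) :
  let R := kernel rho in
  let R' := kernel (fun x => pi (rho x)) in
  exact_subquot4
    (meet R (lie_br brF (@full F) S))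
    (meet (lie_br brF (@full F) R) (lie_br brF (@full F) S))
    id
    (schur_num brF R) (schur_den brF R)
    id
    (schur_num brF R') (schur_den brF R')
    rho
    (meet N (lie_br brG (@full G) (@full G))) (lie_br brG (@full G) N).
Proof.
move=> R R'.
have [rl rb] := hrho.
have [[hFl hFr _] _] := hF.
have [hGl hGr _] := hG.
have [pl _] := hpi.
have brG0 : forall z, brG z 0 = 0 by move=> z; exact: (lin0 (fun a x y => hGr a x y z)).
have Rid : ideal brF R.
  split; first split.
  - exact: lin0 rl.
  - by move=> a x y hx hy; rewrite /R /kernel rl hx hy scaler0 addr0.
  - by move=> x y hy; rewrite /R /kernel !rb hy brG0; split => //;
      exact: (lin0 (fun a u v => hGl a u v (rho x))).
have RR' : forall x, R x -> R' x.
  by move=> x hx; rewrite /R' /kernel hx (lin0 pl).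
have SR' : forall x, S x -> R' x.
  by move=> x hx; apply/hker/hSN; exists x.
have R'split : forall x, R' x -> exists a b, S a /\ R b /\ x = a + b.
  move=> x /hker /hSN [s [hs es]]; exists s, (x - s); split => //; split.
    by rewrite /R /kernel (linB rl) es subrr.
  by rewrite addrC subrK.
have fullI : forall (V : lmodType K) (x : V), full x by [].
split; [|split; [|split; [|split; [|split; [|split]]]]].
- split.
  + move=> x [h1 h2]; split => //.
    by apply: lie_br_mono h2.
  + by move=> x [h1 h2].
- split.
  + by move=> x [h1 h2]; split => //; apply: RR'.
  + by apply: lie_br_mono.
- split.
  + move=> x [h1 h2]; split; first by apply/hker.
    exact: (lie_br_image hrho _ _ h2).
  + apply: (lie_br_image hrho) => // x hx; exact/hker.
- by move=> x [h1 h2] h3; split.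
- move=> x [hxR hxff]; split.
  + move=> /(lie_br_split hFl hFr R'split) [u [v [hu [hv ex]]]].
    exists u; split; last by rewrite ex addrC addKr.
    split => //.
    have hvR : R v by apply: (lie_br_ideal Rid hv).
    have -> : u = x - v by rewrite ex addrK.
    by rewrite /R /kernel (linB rl) hxR hvR subrr.
  + move=> [y [[hyR hyfS] hb]].
    rewrite -(subrK y x); apply: lie_brD.
      exact: (lie_br_mono _ RR' hb).
    exact: (lie_br_mono _ SR' hyfS).
- move=> x [hxR' hxff]; split.
  + move=> /(lie_br_lift hrho (M := @full F) (N := S)) [].
    * by move=> y _; have [x0 e] := rho_surj y; exists x0.
    * by move=> y /hSN.
    * move=> z [hz ez].
      exists (x - z); split.
        split; first by rewrite /R /kernel (linB rl) ez subrr.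
        by apply: lie_brB => //; apply: (lie_br_mono _ _ hz).
      rewrite opprB addrCA subrr addr0.
      exact: (lie_br_mono _ SR' hz).
  + move=> [y [[hyR hyff] hb]].
    have <- : rho (x - y) = rho x by rewrite (linB rl) hyR subr0.
    apply: (lie_br_image hrho _ _ hb) => // u hu; exact/hker.
- move=> z [hzN hzgg].
  have hl : forall y, @full G y -> exists x, @full F x /\ rho x = y.
    by move=> y _; have [x0 e] := rho_surj y; exists x0.
  have [x [hx ex]] := lie_br_lift hrho hl hl hzgg.
  exists x; split.
    by split => //; rewrite /R' /kernel ex; apply/hker.
  by rewrite ex subrr; apply: lie_br0.
Qed.
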